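(* Let $n=4$. List the eight tilings, encoded as 0/1 strings indicating membership of $123,124,134,234$ respectively, in the cyclic order (the octahedral wheel) $0000,1000,1100,1110,1111,0111,0011,0001$ (and back to $0000$). Then the maximal (by inclusion) Condorcet super-domains are exactly: (I) the sets of five cyclically consecutive tilings in this cyclic order, and (II) the sets consisting of two distinct pairs $\{T,\Lambda\setminus T\}$, $\{T',\Lambda\setminus T'\}$ of opposite tilings. Moreover, if $\mathbf D$ is a set of one of these two types, then for every finite set $V$ of odd cardinality and every family $(T_v)_{v\in V}$ of tilings in $\mathbf D$, $sm((T_v)_{v\in V})=T_w$ for some $w\in V$.
   Context: Here $n=4$, $\Lambda$ is the set of 3-element subsets $\{123,124,134,234\}$ of $\{1,2,3,4\}$, and a tiling is a subset $T\subseteq\Lambda$ which is an initial or final segment of the sequence $(123,124,134,234)$ (empty set and $\Lambda$ allowed); there are exactly eight tilings. For a finite set $V$ of odd cardinality and tilings $(T_v)_{v\in V}$, $sm((T_v)_{v\in V})$ is the set of triples lying in $T_v$ for more than $|V|/2$ indices $v$. A set $\mathbf D$ of tilings is a Condorcet super-domain if for every finite $V$ of odd cardinality and every family $(T_v)_{v\in V}$ with all $T_v\in\mathbf D$, $sm((T_v)_{v\in V})$ is a tiling. *)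

(* Defs.v *)
From mathcomp Require Import all_boot.
Set Implicit Arguments. Unset Strict Implicit. Unset Printing Implicit Defensive.

(* Lambda = the four 3-subsets of {1,2,3,4}, encoded as 'I_4 with
   0 = 123, 1 = 124, 2 = 134, 3 = 234 (the order of the sequence). *)
Notation Lambda := 'I_4.

Definition tiling (T : {set Lambda}) : Prop :=
  exists k : nat, T = [set i : Lambda | i < k] \/ T = [set i : Lambda | k <= i].

Definition sm (V : finType) (P : V -> {set Lambda}) : {set Lambda} :=
  [set i : Lambda | #|V| < 2 * #|[set v | i \in P v]|].

Definition condorcet (D : {set {set Lambda}}) : Prop :=
  (forall T, T \in D -> tiling T) /\
  forall (V : finType) (P : V -> {set Lambda}),
    odd #|V| -> (forall v, P v \in D) -> tiling (sm P).

Definition maximal_condorcet (D : {set {set Lambda}}) : Prop :=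
  condorcet D /\
  forall D' : {set {set Lambda}}, condorcet D' -> D \subset D' -> D' = D.

(* The octahedral wheel 0000,1000,1100,1110,1111,0111,0011,0001 (cyclic). *)
Definition wheel (n : nat) : {set Lambda} :=
  let k := n %% 8 in
  if k <= 4 then [set i : Lambda | i < k] else [set i : Lambda | k - 4 <= i].

Definition typeI (D : {set {set Lambda}}) : Prop :=
  exists s : nat, D = [set wheel (s + j) | j : 'I_5].

Definition typeII (D : {set {set Lambda}}) : Prop :=
  exists T T' : {set Lambda}, [/\ tiling T, tiling T', T' != T, T' != ~: T &
    D = [set T; ~: T; T'; ~: T']].

(* Main.v *)
Require Import Defs.
From mathcomp Require Import all_boot zify.
Set Implicit Arguments. Unset Strict Implicit. Unset Printing Implicit Defensive.


Definition memw (n i : nat) : bool :=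
  let k := n %% 8 in if k <= 4 then i < k else k - 4 <= i.

Lemma in_wheel n (i : Lambda) : (i \in wheel n) = memw n i.
Proof. by rewrite /wheel /memw; case: ifP => _; rewrite inE. Qed.

Lemma memw_mod n i : memw (n %% 8) i = memw n i.
Proof. by rewrite /memw modn_mod. Qed.

Lemma wheel_mod a b : a %% 8 = b %% 8 -> wheel a = wheel b.
Proof. by move=> h; apply/setP => i; rewrite !in_wheel -memw_mod h memw_mod. Qed.

Lemma all8 (Q : nat -> bool) : all Q (iota 0 8) -> forall x, x < 8 -> Q x.
Proof. by move/allP => H x hx; apply: H; rewrite mem_iota. Qed.

Lemma all4 (Q : nat -> bool) : all Q (iota 0 4) -> forall x, x < 4 -> Q x.
Proof. by move/allP => H x hx; apply: H; rewrite mem_iota. Qed.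

Lemma wheel_inj a b : wheel a = wheel b -> a %% 8 = b %% 8.
Proof.
move/setP => H.
have Hi : forall i, i < 4 -> memw (a %% 8) i = memw (b %% 8) i.
  by move=> i lt; have := H (Ordinal lt); rewrite !in_wheel !memw_mod.
have chk := all8 (Q := fun x => all (fun y =>
   [&& memw x 0 == memw y 0, memw x 1 == memw y 1, memw x 2 == memw y 2
     & memw x 3 == memw y 3] ==> (x == y)) (iota 0 8)) (erefl true).
have := all8 (chk _ (ltn_pmod a (isT : 0 < 8))) (ltn_pmod b (isT : 0 < 8)).
by rewrite !Hi // !eqxx /= => /eqP.
Qed.

Lemma wheelC n : ~: wheel n = wheel (n + 4).
Proof.
apply/setP => i; rewrite inE !in_wheel -memw_mod -(memw_mod (n+4)) -modnDml.
have chk := all8 (Q := fun x => all (fun i => memw ((x + 4) %% 8) i == ~~ memw x i)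
   (iota 0 4)) (erefl true) (ltn_pmod n (isT : 0 < 8)).
by rewrite (eqP (all4 chk (ltn_ord i))).
Qed.

Lemma tiling_wheel_ n : tiling (wheel n).
Proof.
rewrite /wheel; case: ifP => _; first by exists (n %% 8); left.
by exists (n %% 8 - 4); right.
Qed.

Lemma tiling_wheel T : tiling T -> exists2 j, j < 8 & T = wheel j.
Proof.
case=> k [->|->].
  case: (leqP k 4) => hk.
    exists k; first lia.
    by apply/setP => i; rewrite inE in_wheel /memw modn_small ?hk //; lia.
  exists 4 => //; apply/setP => i; rewrite inE in_wheel /memw /=.
  have := ltn_ord i; have : 4 < k by []; clear; move: (nat_of_ord i) => j; lia.
case: (leqP k 3) => hk.
  case: (posnP k) => [->|kp].
    exists 4 => //; apply/setP => i; rewrite inE in_wheel /memw /=.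
    by have := ltn_ord i; move: (nat_of_ord i) => j ->.
  exists (k + 4); first lia.
  apply/setP => i; rewrite inE in_wheel /memw modn_small; last lia.
  rewrite ifN; last lia. by rewrite addnK.
exists 0 => //; apply/setP => i; rewrite inE in_wheel /memw /=.
have := ltn_ord i; move: hk (nat_of_ord i) => hk j hj.
apply/negbTE; lia.
Qed.

Lemma tilingC T : tiling T -> tiling (~: T).
Proof. by case/tiling_wheel => j _ ->; rewrite wheelC; apply: tiling_wheel_. Qed.


Lemma cardS_sum (V : finType) (Q : pred V) : #|[set v | Q v]| = \sum_v (Q v : nat).
Proof. by rewrite -sum1_card big_mkcond /=; apply: eq_bigr => v _; rewrite inE; case: (Q v). Qed.

Lemma card_suffix (V : finType) (f : V -> nat) k :
  #|[set v | k <= f v]| = #|V| - #|[set v | f v < k]|.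
Proof.
rewrite -(cardsC [set v | f v < k]); rewrite addKn; apply: eq_card => v; rewrite !inE; by rewrite leqNgt.
Qed.

Lemma median (V : finType) (f : V -> nat) m0 : odd #|V| -> (forall v, f v < m0) ->
  exists w, forall k, (f w < k) = (#|V| < 2 * #|[set v | f v < k]|) /\
                      (k <= f w) = (#|V| < 2 * #|[set v | k <= f v]|).
Proof.
move=> oddN hf.
set g := fun k => #|[set v | f v < k]|.
have gmono : forall a b, a <= b -> g a <= g b.
  move=> a b ab; apply: subset_leq_card; apply/subsetP => v; rewrite !inE => h.
  exact: leq_trans h ab.
have gm0 : g m0 = #|V|.
  by rewrite /g; apply: eq_card => v; rewrite !inE hf.
have g0 : g 0 = 0 by rewrite /g; apply: eq_card0 => v; rewrite !inE.
have Npos : 0 < #|V| by case: #|V| oddN.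
have ex : exists k, #|V| < 2 * g k by exists m0; rewrite gm0; lia.
set m := ex_minn ex.
have [Qm minm] : #|V| < 2 * g m /\ forall k, #|V| < 2 * g k -> m <= k.
  by rewrite /m; case: ex_minnP.
have mpos : 0 < m by case: (posnP m) Qm => [->|//]; rewrite g0.
have notQ : ~~ (#|V| < 2 * g m.-1).
  by apply/negP => /minm; lia.
have [w hw] : exists w, f w = m.-1.
  case: (boolP [exists v, (f v < m) && ~~ (f v < m.-1)]).
    case/existsP => v /andP [h1 h2]; exists v; lia.
  rewrite negb_exists => /forallP H.
  have : g m <= g m.-1.
    apply: subset_leq_card; apply/subsetP => v; rewrite !inE => h.
    by have := H v; rewrite h /= negbK.
  lia.
have oddE := odd_double_half #|V|; rewrite oddN in oddE.
have key : forall k, (f w < k) = (#|V| < 2 * g k).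
  move=> k; rewrite hw; case: (leqP m k) => mk.
    have := gmono _ _ mk; rewrite -/(g k) => h; apply/idP/idP => _; lia.
  have : g k <= g m.-1 by apply: gmono; lia.
  rewrite -/(g k) => h; apply/idP/idP; lia.
exists w => k; split; first exact: key.
have gle : g k <= #|V| by rewrite /g; apply: max_card.
rewrite card_suffix leqNgt key -/(g k); apply/idP/idP; lia.
Qed.

Lemma memw_shift s j i : memw (s + j) i = memw (s %% 8 + j) i.
Proof. by rewrite -memw_mod -modnDml memw_mod. Qed.

Lemma typeI_sm s (V : finType) (P : V -> {set Lambda}) : odd #|V| ->
  (forall v, P v \in [set wheel (s + j) | j : 'I_5]) -> exists w, sm P = P w.
Proof.
move=> oddN HP.
pose f v := nat_of_ord (odflt ord0 [pick j : 'I_5 | P v == wheel (s + j)]).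
have Pf : forall v, P v = wheel (s + f v).
  move=> v; rewrite /f; case: pickP => [j /eqP //| H].
  by case/imsetP: (HP v) => j _ e; have := H j; rewrite e eqxx.
have f5 : forall v, f v < 5 by move=> v; rewrite /f; case: pickP.
have [w hw] := median oddN f5.
exists w; apply/setP => i; rewrite inE Pf in_wheel memw_shift.
have chk := all8 (Q := fun x => all (fun i => has (fun k =>
   all (fun j => memw (x + j) i == (j < k)) (iota 0 5) ||
   all (fun j => memw (x + j) i == (k <= j)) (iota 0 5)) (iota 0 6)) (iota 0 4))
   (erefl true) (ltn_pmod s (isT : 0 < 8)).
have /hasP [k _ /orP [] /allP Hk] := all4 chk (ltn_ord i).
  have E : [set v | i \in P v] = [set v | f v < k].
    apply/setP => v; rewrite !inE Pf in_wheel memw_shift.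
    by apply/eqP/Hk; rewrite mem_iota f5.
  by rewrite E (eqP (Hk _ _)) ?mem_iota ?f5 //; case: (hw k).
have E : [set v | i \in P v] = [set v | k <= f v].
  apply/setP => v; rewrite !inE Pf in_wheel memw_shift.
  by apply/eqP/Hk; rewrite mem_iota f5.
by rewrite E (eqP (Hk _ _)) ?mem_iota ?f5 //; case: (hw k).
Qed.


Lemma setC_neq (A : {set Lambda}) : (A == ~: A) = false.
Proof. by apply/eqP => /setP /(_ ord0); rewrite inE; case: (ord0 \in A). Qed.

Definition cnt A A' B B' (x y : bool) := A*x + A'*(~~x) + B*y + B'*(~~y).

Lemma ar1 A A' B B' q : A+A'+B+B' = 2*q+1 -> A+A'+B+B' < 2 * (A+B) -> A+A'+B+B' < 2 * (A+B') ->
  0 < A /\ forall x y : bool, (A+A'+B+B' < 2*(cnt A A' B B' x y)) = x.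
Proof. rewrite /cnt; move=> hq h1 h2; split; first lia. case; case => /=; apply/idP/idP; lia. Qed.
Lemma ar2 A A' B B' q : A+A'+B+B' = 2*q+1 -> A+A'+B+B' < 2 * (A+B) -> ~~ (A+A'+B+B' < 2 * (A+B')) ->
  0 < B /\ forall x y : bool, (A+A'+B+B' < 2*(cnt A A' B B' x y)) = y.
Proof. rewrite /cnt; move=> hq h1 h2; split; first lia. case; case => /=; apply/idP/idP; lia. Qed.
Lemma ar3 A A' B B' q : A+A'+B+B' = 2*q+1 -> ~~ (A+A'+B+B' < 2 * (A+B)) -> A+A'+B+B' < 2 * (A+B') ->
  0 < B' /\ forall x y : bool, (A+A'+B+B' < 2*(cnt A A' B B' x y)) = ~~ y.
Proof. rewrite /cnt; move=> hq h1 h2; split; first lia. case; case => /=; apply/idP/idP; lia. Qed.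
Lemma ar4 A A' B B' q : A+A'+B+B' = 2*q+1 -> ~~ (A+A'+B+B' < 2 * (A+B)) -> ~~ (A+A'+B+B' < 2 * (A+B')) ->
  0 < A' /\ forall x y : bool, (A+A'+B+B' < 2*(cnt A A' B B' x y)) = ~~ x.
Proof. rewrite /cnt; move=> hq h1 h2; split; first lia. case; case => /=; apply/idP/idP; lia. Qed.

Lemma typeII_sm T T' (V : finType) (P : V -> {set Lambda}) : T' != T -> T' != ~: T ->
  odd #|V| -> (forall v, P v \in [set T; ~:T; T'; ~:T']) -> exists w, sm P = P w.
Proof.
move=> h1 h2 oddN HP.
have n1 : (T' == T) = false by apply/negbTE.
have n2 : (T == T') = false by rewrite eq_sym.
have n3 : (T' == ~:T) = false by apply/negbTE.
have n4 : (~:T == T') = false by rewrite eq_sym.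
have n5 : (~:T' == ~:T) = false by rewrite (inj_eq (@setC_inj _)).
have n6 : (~:T == ~:T') = false by rewrite eq_sym.
have n7 : (~:T' == T) = false by rewrite -[X in _ == X](setCK T) (inj_eq (@setC_inj _)) n3.
have n8 : (T == ~:T') = false by rewrite eq_sym.
have n9 : (~:T == T) = false by rewrite eq_sym setC_neq.
have n10 : (~:T' == T') = false by rewrite eq_sym setC_neq.
have pw1 : forall v, 1 = (P v == T) + (P v == ~:T) + (P v == T') + (P v == ~:T').
  move=> v; move: (HP v); rewrite !inE -!orbA => /or4P [] /eqP ->;
  by rewrite ?eqxx ?n1 ?n2 ?n3 ?n4 ?n5 ?n6 ?n7 ?n8 ?n9 ?n10 ?setC_neq.
have pw2 : forall (i : Lambda) v, (i \in P v : nat) = (P v == T) * (i \in T) +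
     (P v == ~:T) * (i \notin T) + (P v == T') * (i \in T') + (P v == ~:T') * (i \notin T').
  move=> i v; move: (HP v); rewrite !inE -!orbA => /or4P [] /eqP ->;
  by rewrite ?eqxx ?n1 ?n2 ?n3 ?n4 ?n5 ?n6 ?n7 ?n8 ?n9 ?n10 ?setC_neq ?inE /= ?muln0 ?mul0n ?addn0 ?add0n ?mul1n.
set A := #|[set v | P v == T]|.
set A' := #|[set v | P v == ~:T]|.
set B := #|[set v | P v == T']|.
set B' := #|[set v | P v == ~:T']|.
have HN : #|V| = A + A' + B + B'.
  rewrite /A /A' /B /B' !cardS_sum -!big_split /= -sum1_card.
  by apply: eq_bigr => v _; rewrite -pw1.
have HX : forall i : Lambda, #|[set v | i \in P v]| =
    A * (i \in T) + A' * (i \notin T) + B * (i \in T') + B' * (i \notin T').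
  move=> i; rewrite /A /A' /B /B' !cardS_sum !big_distrl -!big_split /=.
  by apply: eq_bigr => v _; rewrite -pw2.
have [q hq] : exists q, #|V| = 2 * q + 1.
  by exists #|V|./2; rewrite -[LHS]odd_double_half oddN addnC -muln2 mulnC.
rewrite HN in hq.
have ex : forall U, 0 < #|[set v | P v == U]| -> exists w, P w = U.
  by move=> U /card_gt0P [w]; rewrite inE => /eqP; exists w.
have key : forall U, 0 < #|[set v | P v == U]| ->
   (forall i : Lambda, (#|V| < 2 * #|[set v | i \in P v]|) = (i \in U)) ->
   exists w, sm P = P w.
  move=> U /ex [w hw] H; exists w; apply/setP => i; by rewrite inE H hw.
have HX' : forall i : Lambda, #|[set v | i \in P v]| = cnt A A' B B' (i \in T) (i \in T').
  by move=> i; rewrite HX /cnt.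
case: (boolP (#|V| < 2 * (A + B))) => c11; case: (boolP (#|V| < 2 * (A + B'))) => c10;
  rewrite HN in c11 c10.
- have [p e] := ar1 hq c11 c10.
  by apply: (key T) => // i; rewrite HX' HN e.
- have [p e] := ar2 hq c11 c10.
  by apply: (key T') => // i; rewrite HX' HN e.
- have [p e] := ar3 hq c11 c10.
  by apply: (key (~:T')) => // i; rewrite HX' HN e inE.
- have [p e] := ar4 hq c11 c10.
  by apply: (key (~:T)) => // i; rewrite HX' HN e inE.
Qed.


Definition maj3 a b c i := 3 < 2 * (memw a i + memw b i + memw c i).
Definition bad3 a b c :=
  all (fun j => has (fun i => maj3 a b c i != memw j i) (iota 0 4)) (iota 0 8).

Lemma cond3 D a b c : condorcet D -> wheel a \in D -> wheel b \in D -> wheel c \in D ->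
  ~~ bad3 a b c.
Proof.
move=> [_ HC] ha hb hc; apply/negP => hbad.
pose P := fun v : 'I_3 => if nat_of_ord v == 0 then wheel a
   else if nat_of_ord v == 1 then wheel b else wheel c.
have odd3 : odd #|'I_3| by rewrite card_ord.
have inD : forall v, P v \in D by move=> v; rewrite /P; case: ifP => _ //; case: ifP.
case/tiling_wheel: (HC _ P odd3 inD) => j hj E.
have /hasP [i] := all8 hbad hj; rewrite mem_iota add0n /= => hi; apply/negP; rewrite negbK.
move/setP/(_ (Ordinal hi)): E; rewrite in_wheel => <-.
rewrite inE cardS_sum !big_ord_recr big_ord0 /= /P /= !in_wheel card_ord.
by rewrite /maj3 add0n.
Qed.

Definition badfree (b : nat -> bool) := all (fun x => all (fun y => all (fun z =>
  (b x && b y && b z) ==> ~~ bad3 x y z) (iota 0 8)) (iota 0 8)) (iota 0 8).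
Definition covI (b : nat -> bool) :=
  has (fun s => all (fun j => b j ==> ((j + 8 - s) %% 8 < 5)) (iota 0 8)) (iota 0 8).
Definition covII (b : nat -> bool) := has (fun p => has (fun q => (p != q) &&
  all (fun j => b j ==> ((j %% 4 == p) || (j %% 4 == q))) (iota 0 8)) (iota 0 4)) (iota 0 4).

Lemma comb b0 b1 b2 b3 b4 b5 b6 b7 :
  let b := nth false [:: b0; b1; b2; b3; b4; b5; b6; b7] in
  badfree b ==> (covI b || covII b).
Proof. move: b0 b1 b2 b3 b4 b5 b6 b7; do 8 case; vm_compute; reflexivity. Qed.


Lemma cover8 D : condorcet D -> exists M, (typeI M \/ typeII M) /\ D \subset M.
Proof.
move=> hD; have tD := hD.1.
pose b := nth false [:: wheel 0 \in D; wheel 1 \in D; wheel 2 \in D; wheel 3 \in D;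
                       wheel 4 \in D; wheel 5 \in D; wheel 6 \in D; wheel 7 \in D].
have hb : forall j, j < 8 -> b j = (wheel j \in D).
  by move=> j hj; do 8 (case: j hj => [|j] hj //).
have bf : badfree b.
  apply/allP => x; rewrite mem_iota add0n => /andP [_ hx].
  apply/allP => y; rewrite mem_iota add0n => /andP [_ hy].
  apply/allP => z; rewrite mem_iota add0n => /andP [_ hz].
  apply/implyP; rewrite !hb // => /andP [/andP [bx by_] bz].
  exact: cond3 hD bx by_ bz.
have := comb (wheel 0 \in D) (wheel 1 \in D) (wheel 2 \in D) (wheel 3 \in D)
   (wheel 4 \in D) (wheel 5 \in D) (wheel 6 \in D) (wheel 7 \in D).
move=> C; change (is_true (badfree b ==> (covI b || covII b))) in C.
move: C; rewrite bf /= => /orP [].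
  case/hasP => s; rewrite mem_iota add0n => /andP [_ hs] /allP H.
  exists [set wheel (s + j) | j : 'I_5]; split; first by left; exists s.
  apply/subsetP => T hT; have [j hj eT] := tiling_wheel (tD _ hT).
  have := H j; rewrite mem_iota add0n leq0n hj hb // -eT hT => /(_ isT) hk.
  apply/imsetP; exists (Ordinal hk) => //; rewrite eT; apply: wheel_mod => /=; lia.
case/hasP => p; rewrite mem_iota add0n => /andP [_ hp].
case/hasP => q; rewrite mem_iota add0n => /andP [_ hq] /andP [pq /allP H].
exists [set wheel p; ~: wheel p; wheel q; ~: wheel q]; split.
  right; exists (wheel p), (wheel q); split; try apply: tiling_wheel_.
  - by apply/eqP => /wheel_inj; lia.
  - by rewrite wheelC; apply/eqP => /wheel_inj; lia.
  - by [].
apply/subsetP => T hT; have [j hj eT] := tiling_wheel (tD _ hT).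
have := H j; rewrite mem_iota add0n leq0n hj hb // -eT hT => /(_ isT) hj4.
rewrite !inE !wheelC eT.
have : j = p \/ j = p + 4 \/ j = q \/ j = q + 4 by lia.
by case=> [->|[->|[->|->]]]; rewrite eqxx ?orbT.
Qed.


Lemma typeI_card s : #|[set wheel (s + j) | j : 'I_5]| = 5.
Proof.
rewrite card_imset ?card_ord // => x y /wheel_inj e; apply/val_inj => /=.
have := ltn_ord x; have := ltn_ord y; lia.
Qed.

Lemma typeII_card (T T' : {set Lambda}) : T' != T -> T' != ~: T -> #|[set T; ~:T; T'; ~:T']| = 4.
Proof.
move=> h1 h2.
have -> : [set T; ~:T; T'; ~:T'] = [set x in [:: T; ~:T; T'; ~:T']].
  by apply/setP => x; rewrite !inE -!orbA.
rewrite cardsE; apply/card_uniqP.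
have n1 : (T' == T) = false by apply/negbTE.
have n2 : (T == T') = false by rewrite eq_sym.
have n3 : (T' == ~:T) = false by apply/negbTE.
have n4 : (~:T == T') = false by rewrite eq_sym.
have n5 : (~:T' == ~:T) = false by rewrite (inj_eq (@setC_inj _)).
have n6 : (~:T == ~:T') = false by rewrite eq_sym.
have n7 : (~:T' == T) = false by rewrite -[X in _ == X](setCK T) (inj_eq (@setC_inj _)) n3.
have n8 : (T == ~:T') = false by rewrite eq_sym.
have n9 : (~:T == T) = false by rewrite eq_sym setC_neq.
have n10 : (~:T' == T') = false by rewrite eq_sym setC_neq.
by rewrite /= !inE !negb_or ?n1 ?n2 ?n3 ?n4 ?n5 ?n6 ?n7 ?n8 ?n9 ?n10 ?setC_neq.

Qed.

Lemma typeIII_sm D : typeI D \/ typeII D -> forall (V : finType) (P : V -> {set Lambda}),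
  odd #|V| -> (forall v, P v \in D) -> exists w : V, sm P = P w.
Proof.
case=> [[s ->]|[T [T' [tT tT' h1 h2 ->]]]] V P oddN HP.
  exact: typeI_sm oddN HP.
exact: typeII_sm h1 h2 oddN HP.
Qed.

Lemma typeIII_condorcet D : typeI D \/ typeII D -> condorcet D.
Proof.
move=> hD; have tD : forall T, T \in D -> tiling T.
  case: hD => [[s ->]|[T [T' [tT tT' h1 h2 ->]]]] U.
    by case/imsetP => j _ ->; apply: tiling_wheel_.
  by rewrite !inE -!orbA => /or4P [] /eqP -> //; apply: tilingC.
split; first exact: tD.
move=> V P oddN HP; have [w ->] := typeIII_sm hD oddN HP; exact: tD (HP w).
Qed.

Lemma inM s x : wheel x \in [set wheel (s + j) | j : 'I_5] -> exists2 k, k < 5 & x %% 8 = (s + k) %% 8.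
Proof. by case/imsetP => k _ /wheel_inj e; exists k. Qed.

Lemma incl_eq D M : typeI D \/ typeII D -> typeI M \/ typeII M -> D \subset M -> D = M.
Proof.
move=> hD hM sub.
have cardD : #|D| = 5 \/ #|D| = 4 /\ typeII D.
  case: hD => [[s ->]|[T [T' [tT tT' h1 h2 ->]]]]; first by left; rewrite typeI_card.
  right; split; first by rewrite typeII_card.
  by exists T, T'.
have cardM : #|M| = 5 /\ typeI M \/ #|M| = 4.
  case: hM => [[s ->]|[T [T' [tT tT' h1 h2 ->]]]]; first by left; rewrite typeI_card; split => //; exists s.
  by right; rewrite typeII_card.
have le := subset_leq_card sub.
case: cardD => [cD|[cD hII]]; case: cardM => [[cM hI]|cM].
- by apply/eqP; rewrite eqEcard sub cD cM.
- by rewrite cD cM in le.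
- exfalso; case: hI => s eM; case: hII => [T [T' [tT tT' h1 h2 eD]]].
  have [p _ eT] := tiling_wheel tT; have [q _ eT'] := tiling_wheel tT'.
  rewrite eD eM eT eT' !wheelC in sub.
  have m : forall x, wheel x \in [set wheel p; wheel (p + 4); wheel q; wheel (q + 4)] ->
      exists2 k, k < 5 & x %% 8 = (s + k) %% 8.
    by move=> x hx; apply: inM; apply: (subsetP sub).
  have [k1 hk1 e1] : exists2 k, k < 5 & p %% 8 = (s + k) %% 8 by apply: m; rewrite !inE eqxx.
  have [k2 hk2 e2] : exists2 k, k < 5 & (p + 4) %% 8 = (s + k) %% 8 by apply: m; rewrite !inE eqxx ?orbT.
  have [k3 hk3 e3] : exists2 k, k < 5 & q %% 8 = (s + k) %% 8 by apply: m; rewrite !inE eqxx ?orbT.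
  have [k4 hk4 e4] : exists2 k, k < 5 & (q + 4) %% 8 = (s + k) %% 8 by apply: m; rewrite !inE eqxx ?orbT.
  have d1 : q %% 8 <> p %% 8 by move=> e; move: h1; rewrite eT eT' (wheel_mod e) eqxx.
  have d2 : q %% 8 <> (p + 4) %% 8 by move=> e; move: h2; rewrite eT eT' wheelC (wheel_mod e) eqxx.
  lia.
- by apply/eqP; rewrite eqEcard sub cD cM.
Qed.

Theorem mainTheorem6 :
  (forall D : {set {set Lambda}}, maximal_condorcet D <-> typeI D \/ typeII D) /\
  (forall D : {set {set Lambda}}, typeI D \/ typeII D ->
     forall (V : finType) (P : V -> {set Lambda}),
       odd #|V| -> (forall v, P v \in D) -> exists w : V, sm P = P w).
Proof.
split; last exact: typeIII_sm.
move=> D; split.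
  case=> hD hmax; have [M [hM sub]] := cover8 hD.
  by rewrite -(hmax M (typeIII_condorcet hM) sub).
move=> hD; split; first exact: typeIII_condorcet.
move=> D' cD' sub; have [M [hM sub']] := cover8 cD'.
have eDM : D = M := @incl_eq _ _ hD hM (subset_trans sub sub').
by apply/eqP; rewrite eqEsubset sub andbT eDM.
Qed.
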